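(* Let $(X,E,\ell)$ be a uniformly connected and fully deterministic edge-labelled directed graph with label alphabet $\Sigma$. Then for all $x,y\in X$ the language $L_{x,y}$ is growth sensitive.
   Context: $\Sigma$ is a finite alphabet, $\Sigma^*$ the set of finite words (including the empty word $\epsilon$), $\Sigma^+=\Sigma^*\setminus\{\epsilon\}$. A factor of $a_1\cdots a_n$ is a word $a_i\cdots a_j$, $1\le i\le j\le n$. For $L\subset\Sigma^*$, $\mathsf h(L)=\limsup_{n\to\infty}\frac1n\log|\{w\in L:|w|=n\}|$ and, for finite $F\subset\Sigma^+$, $L^F=\{w\in L:\text{no }v\in F\text{ is a factor of }w\}$. $L$ is growth sensitive if $\mathsf h(L^F)<\mathsf h(L)$ for every finite non-empty set $F\subset\Sigma^+$ consisting of factors of elements of $L$. $(X,E,\ell)$ is a directed graph whose edges $(x,a,y)$ carry labels $a\in\Sigma$ (two edges with the same endpoints have distinct labels); $L_{x,y}$ is the set of labels (concatenated edge labels) of all paths from $x$ to $y$, including $\epsilon$ for the empty path when $x=y$. The graph is fully deterministic if for every vertex $x$ and every $a\in\Sigma$ there is exactly one edge with initial vertex $x$ and label $a$. It is uniformly connected if there is a path between any ordered pair of vertices and there is $K$ such that for every edge from $x$ to $y$ there is a path from $y$ to $x$ of length at most $K$. *)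

(* Defs.v *)
From HB Require Import structures.
From mathcomp Require Import all_boot all_order all_algebra.
From mathcomp Require Import boolp classical_sets reals ereal exp sequences.
Set Implicit Arguments. Unset Strict Implicit. Unset Printing Implicit Defensive.
Import Order.TTheory GRing.Theory Num.Theory.
Local Open Scope ring_scope.

Definition language (Sigma : finType) := seq Sigma -> Prop.

Definition count_len (Sigma : finType) (L : language Sigma) (n : nat) : nat :=
  #|[set t : n.-tuple Sigma | `[< L (tval t) >] ]|.

Definition growth (R : realType) (Sigma : finType) (L : language Sigma) : \bar R :=
  limn_esup (fun n : nat =>
    if count_len L n == 0%N then -oo%E
    else ((ln (count_len L n)%:R) / n%:R)%:E).

Definition avoid (Sigma : finType) (L : language Sigma) (F : seq (seq Sigma))
  : language Sigma :=
  fun w => L w /\ (forall v, v \in F -> ~~ infix v w).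

Definition factor (Sigma : finType) (v w : seq Sigma) : Prop :=
  v != [::] /\ infix v w.

Definition growth_sensitive (R : realType) (Sigma : finType) (L : language Sigma)
  : Prop :=
  forall F : seq (seq Sigma),
    F != [::] ->
    (forall v, v \in F -> v != [::] /\ exists w, L w /\ factor v w) ->
    (growth R (avoid L F) < growth R L)%E.

(* Edge-labelled directed graph: E x a y means there is an edge (x,a,y).
   Edges are identified with triples, so two edges with the same endpoints
   have distinct labels. *)
Inductive walk (X : Type) (Sigma : finType) (E : X -> Sigma -> X -> Prop)
  : X -> seq Sigma -> X -> Prop :=
| walk_nil x : walk E x [::] x
| walk_cons x a z w y : E x a z -> walk E z w y -> walk E x (a :: w) y.

Definition Lxy (X : Type) (Sigma : finType) (E : X -> Sigma -> X -> Prop)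
  (x y : X) : language Sigma := fun w => walk E x w y.

Definition fully_deterministic (X : Type) (Sigma : finType)
  (E : X -> Sigma -> X -> Prop) : Prop :=
  forall (x : X) (a : Sigma), exists! y, E x a y.

Definition uniformly_connected (X : Type) (Sigma : finType)
  (E : X -> Sigma -> X -> Prop) : Prop :=
  (forall x y : X, exists w, walk E x w y) /\
  exists K : nat, forall (x : X) (a : Sigma) (y : X), E x a y ->
    exists w, walk E y w x /\ (size w <= K)%N.

(* Main.v *)
Require Import Defs.
From HB Require Import structures.
From mathcomp Require Import all_boot all_order all_algebra.
From mathcomp Require Import boolp classical_sets reals ereal exp sequences.
From mathcomp Require Import ring lra zify.
Set Implicit Arguments. Unset Strict Implicit. Unset Printing Implicit Defensive.
Import Order.TTheory GRing.Theory Num.Theory.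
Local Open Scope ring_scope.
Local Open Scope ereal_scope.

Lemma LS_eq (R : realType) (u : nat -> \bar R) :
  limn_esup u = ereal_inf (range (esups u)).
Proof. rewrite limn_esup_lim; apply/cvg_lim => //; exact: cvg_esups_inf. Qed.

Lemma LS_lb (R : realType) (u : nat -> \bar R) mu :
  (forall N, exists2 m, (N <= m)%N & mu <= u m) -> mu <= limn_esup u.
Proof.
move=> H; rewrite LS_eq; apply: le_ereal_inf_tmp => _ [N _ <-].
have [m Nm um] := H N; apply: le_ereal_sup_tmp; exists (u m) => //.
by exists m.
Qed.

Lemma LS_ub (R : realType) (u : nat -> \bar R) N : limn_esup u <= esups u N.
Proof. rewrite LS_eq; apply: ereal_inf_lbound; by exists N. Qed.

Lemma LS_approx (R : realType) (u : nat -> \bar R) r :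
  r < limn_esup u -> forall N, exists2 n, (N <= n)%N & r < u n.
Proof.
move=> H N; have := lt_le_trans H (LS_ub u N).
by move=> /ereal_sup_gt [_ [n Nn <-]] ?; exists n.
Qed.

Definition gr (R : realType) (c : nat -> nat) (n : nat) : \bar R :=
  if c n == 0%N then -oo else ((ln (c n)%:R) / n%:R)%:E.

Lemma gr_ge0 (R : realType) (c : nat -> nat) n : (0 < c n)%N -> 0 <= gr R c n.
Proof.
move=> h; rewrite /gr; case: eqP => [e|_]; first by rewrite e in h.
rewrite lee_fin divr_ge0 // ln_ge0 // ler1n //.
Qed.

Lemma gr_le (R : realType) (c : nat -> nat) (d : nat) n :
  (c n <= d ^ n)%N -> gr R c n <= (d%:R)%:E.
Proof.
move=> h; rewrite /gr; case: eqP => [_|/eqP cn0]; first by rewrite leNye.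
rewrite lee_fin; have [->|n0] := posnP n; first by rewrite invr0 mulr0 ler0n.
have d0 : (0 < d)%N.
  case: (posnP d) h => // ->; rewrite exp0n // leqn0 => /eqP; move/eqP: cn0. by [].
have cpos : (0 < (c n)%:R :> R)%R by rewrite ltr0n lt0n.
rewrite ler_pdivrMr ?ltr0n //.
apply: (le_trans (y := ln ((d ^ n)%:R))).
  rewrite ler_ln ?posrE ?ltr0n ?expn_gt0 ?d0 ?ler_nat //.
  by move: cpos; rewrite ltr0n.
rewrite natrX lnXn ?ltr0n // -[(ln _ *+ n)%R]mulr_natr ler_wpM2r //.
by apply/ltW/ln_sublinear; rewrite ltr0n.
Qed.

Lemma analytic (R : realType) (c1 c2 : nat -> nat) (d p Bl : nat) :
  (0 < p)%N -> (forall n, c1 n <= d ^ n)%N ->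
  (forall D n, (0 < D)%N ->
     (c1 n * D ^ (n %/ (D * p)) <= c2 (n + Bl * (n %/ (D * p))))%N) ->
  (forall N, exists2 m, (N <= m)%N & (0 < c2 m)%N) ->
  limn_esup (gr R c1) < limn_esup (gr R c2).
Proof.
move=> p0 hd hins hinf.
have lub : limn_esup (gr R c1) <= (d%:R)%:E.
  apply: (le_trans (LS_ub _ 0)); apply: ge_ereal_sup => _ [n _ <-].
  exact: gr_le.
case El : (limn_esup (gr R c1)) lub => [r| |] lub; last first.
- apply: (lt_le_trans _ (LS_lb (mu := 0) _)); first by rewrite ltNye.
  move=> N; have [m Nm hm] := hinf N; exists m => //; exact: gr_ge0.
- by rewrite leye_eq in lub.
set T := ((`|r| + 1) * Bl%:R + 2)%R.
set D := (Num.truncn (expR T)).+1.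
have D0 : (0 < D)%N by [].
have lnD : (T <= ln D%:R)%R.
  rewrite -{1}(expRK T) ler_ln ?posrE ?expR_gt0 ?ltr0n //.
  exact/ltW/truncnS_gt.
set q := (D * p)%N.
have q0 : (0 < q)%N by rewrite muln_gt0 D0.
set eps := (1 / (2 * q%:R) : R)%R.
have eps0 : (0 < eps)%R by rewrite divr_gt0 // mulr_gt0 // ltr0n.
have epsq : (eps * q%:R = 1/2)%R.
  rewrite /eps; field; rewrite pnatr_eq0 -lt0n //.
have qge1 : (1 <= q%:R :> R)%R by rewrite ler1n.
have eps1 : (eps <= 1)%R.
  have : (eps * 1 <= eps * q%:R)%R by rewrite ler_wpM2l // ltW.
  rewrite epsq mulr1; lra.
have : ((r + eps)%:E <= limn_esup (gr R c2)).
  apply: LS_lb => N.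
  have [n Nn hn] := LS_approx (u := gr R c1) (r := (r - eps)%:E)
     (ltac:(by rewrite El lte_fin; lra)) (maxn N (2 * q)).
  move: Nn; rewrite geq_max => /andP[Nn qn].
  set k := (n %/ q)%N.
  have hk : (n <= 2 * (k * q))%N.
    have := divn_eq n q; have := ltn_pmod n q0. rewrite -/k. lia.
  exists (n + Bl * k)%N; first by apply: (leq_trans Nn); exact: leq_addr.
  move: hn; rewrite /gr; case: eqP => [_|/eqP c1n0]; first by rewrite ltNge leNye.
  have hc2 := hins D n D0; rewrite -/q -/k in hc2.
  have c2pos : (0 < c2 (n + Bl * k))%N.
    by apply: (leq_trans _ hc2); rewrite muln_gt0 lt0n c1n0 expn_gt0 D0.
  case: eqP => [e|_]; first by rewrite e in c2pos.
  have n0 : (0 < n)%N by apply: (leq_trans _ qn); rewrite muln_gt0.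
  rewrite !lte_fin lee_fin ltr_pdivlMr ?ltr0n // => h1.
  rewrite ler_pdivlMr ?ltr0n ?addn_gt0 ?n0 //.
  have c1pos : (0 < (c1 n)%:R :> R)%R by rewrite ltr0n lt0n.
  have Dpos : (0 < D%:R :> R)%R by rewrite ltr0n.
  have h2 : (ln ((c1 n)%:R : R) + k%:R * ln (D%:R : R) <= ln ((c2 (n + Bl * k)%N)%:R : R))%R.
    rewrite [(k%:R * _)%R]mulrC mulr_natr -lnXn // -lnM ?posrE ?exprn_gt0 //.
    rewrite ler_ln ?posrE ?mulr_gt0 ?exprn_gt0 ?ltr0n ?lt0n ?c1n0 //.
    by rewrite -natrX -natrM ler_nat.
    by rewrite -lt0n.
  apply: le_trans h2.
  have hk' : (n%:R <= 2 * (k%:R * q%:R) :> R)%R.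
    by rewrite -natrM -(natrM _ 2) ler_nat.
  have habs : (r <= `|r|)%R by exact: ler_norm.
  have Bl0 : (0 <= Bl%:R :> R)%R by [].
  have k0 : (0 <= k%:R :> R)%R by [].
  have n0' : (0 <= n%:R :> R)%R by [].
  rewrite natrD natrM.
  have e2 : (2 * eps * n%:R <= 2 * k%:R)%R.
    have : (2 * eps * n%:R <= 2 * eps * (2 * (k%:R * q%:R)))%R.
      by rewrite ler_wpM2l // mulr_ge0 // ltW.
    have -> : (2 * eps * (2 * (k%:R * q%:R)) = 2 * k%:R * (2 * (eps * q%:R)))%R.
      by ring.
    have h12 : (2 * (1 / 2) = 1 :> R)%R by field.
    by rewrite epsq h12 mulr1.
  have e3 : (0 <= k%:R * Bl%:R * (`|r| + 1 - r - eps))%R.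
    by apply: mulr_ge0; [exact: mulr_ge0|lra].
  have e4 : (k%:R * T <= k%:R * ln D%:R)%R by rewrite ler_wpM2l.
  rewrite /T in e4.
  nra.
move=> h; apply: lt_le_trans h; rewrite lte_fin; lra.
Qed.
Local Close Scope ereal_scope.
Local Close Scope ring_scope.

Definition run (X : Type) (Sigma : Type) (st : X -> Sigma -> X) (x : X)
  (w : seq Sigma) : X := foldl st x w.

Lemma run_cat (X : Type) (Sigma : Type) (st : X -> Sigma -> X) x u w :
  run st x (u ++ w) = run st (run st x u) w.
Proof. exact: foldl_cat. Qed.

Lemma walk_run (X : Type) (Sigma : finType) (E : X -> Sigma -> X -> Prop)
  (st : X -> Sigma -> X) :
  (forall x a y, E x a y <-> y = st x a) ->
  forall w x y, walk E x w y <-> run st x w = y.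
Proof.
move=> hE; elim=> [|a w IH] x y /=.
  split; first by move=> h; inversion h.
  by move=> ->; constructor.
split.
  move=> h; inversion h; subst. rewrite /run /=. apply/IH.
  by have <- : z = st x a by apply/hE.
move=> h; apply: (walk_cons (z := st x a)); first by apply/hE.
exact/IH.
Qed.

Lemma run_nseq (X : Type) (Sigma : Type) (st : X -> Sigma -> X) z c j :
  run st z c = z -> run st z (flatten (nseq j c)) = z.
Proof.
move=> h; elim: j => [|j IH] //=.
by rewrite run_cat h IH.
Qed.

Fixpoint ins (X : Type) (Sigma : Type) (st : X -> Sigma -> X)
  (blk : X -> seq Sigma) (M : nat) (z : X) (w : seq Sigma) (bs : seq bool)
  : seq Sigma :=
  match bs with
  | [::] => w
  | b :: bs' => (if b then blk z else [::]) ++ take M w ++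
                ins st blk M (run st z (take M w)) (drop M w) bs'
  end.

Lemma ins_run (X : Type) (Sigma : Type) (st : X -> Sigma -> X) blk M :
  (forall z, run st z (blk z) = z) ->
  forall bs z w, run st z (ins st blk M z w bs) = run st z w.
Proof.
move=> hb; elim=> [|b bs IH] z w //=.
rewrite run_cat.
have -> : run st z (if b then blk z else [::]) = z by case: b => //; rewrite hb.
by rewrite run_cat IH -run_cat cat_take_drop.
Qed.

Lemma ins_size (X : Type) (Sigma : Type) (st : X -> Sigma -> X) blk M Bl :
  (forall z, size (blk z) = Bl) ->
  forall bs z w, size (ins st blk M z w bs) = (size w + Bl * count id bs)%N.
Proof.
move=> hb; elim=> [|b bs IH] z w /=; first by rewrite muln0 addn0.
rewrite size_cat size_cat IH.
have := size_cat (take M w) (drop M w); rewrite cat_take_drop.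
case: b; rewrite ?hb /=; lia.
Qed.

Lemma ins_inj (X : Type) (Sigma : eqType) (st : X -> Sigma -> X) blk M
  (v : seq Sigma) :
  (forall z, take (size v) (blk z) = v) ->
  (forall z, size v <= size (blk z))%N ->
  (size v <= M)%N ->
  forall bs1 bs2 z w1 w2, size bs1 = size bs2 ->
  (M * size bs1 <= size w1)%N -> (M * size bs2 <= size w2)%N ->
  ~~ infix v w1 -> ~~ infix v w2 ->
  ins st blk M z w1 bs1 = ins st blk M z w2 bs2 -> w1 = w2 /\ bs1 = bs2.
Proof.
move=> hv hvs hM; elim=> [|b1 bs1 IH] [|b2 bs2] z w1 w2 //= es; try discriminate es.
move: es => [es]; rewrite !mulnS => s1 s2 a1 a2.
have t1 : size (take M w1) = M by rewrite size_take; case: ltnP => //; lia.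
have t2 : size (take M w2) = M by rewrite size_take; case: ltnP => //; lia.
have mixed : forall w, size (take M w) = M -> ~~ infix v w ->
   forall z rest rest', blk z ++ rest <> take M w ++ rest'.
  move=> w tw aw z0 rest rest' e.
  have : take (size v) (blk z0 ++ rest) = take (size v) (take M w ++ rest').
    by rewrite e.
  rewrite takel_cat // hv takel_cat ?tw // take_takel // => ev.
  move/negP: aw; apply; rewrite -(cat_take_drop (size v) w) -ev.
  exact: prefix_infix.
have da1 : ~~ infix v (drop M w1).
  apply: contra a1 => h; rewrite -(cat_take_drop M w1); exact: infix_catl.
have da2 : ~~ infix v (drop M w2).
  apply: contra a2 => h; rewrite -(cat_take_drop M w2); exact: infix_catl.
have sd1 : (M * size bs1 <= size (drop M w1))%N by rewrite size_drop; lia.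
have sd2 : (M * size bs2 <= size (drop M w2))%N by rewrite size_drop; lia.
have rest_case : take M w1 ++ ins st blk M (run st z (take M w1)) (drop M w1) bs1 =
                 take M w2 ++ ins st blk M (run st z (take M w2)) (drop M w2) bs2 ->
                 w1 = w2 /\ bs1 = bs2.
  move=> /eqP; rewrite eqseq_cat ?t1 ?t2 // => /andP[/eqP tk /eqP].
  rewrite tk => /(IH _ _ _ _ es sd1 sd2 da1 da2) [dk ->]; split => //.
  by rewrite -(cat_take_drop M w1) -(cat_take_drop M w2) tk dk.
case: b1; case: b2 => /=.
- by move/eqP; rewrite eqseq_cat // => /andP[_ /eqP] /rest_case [-> ->].
- by move=> e; exfalso; exact: (mixed w2 t2 a2 z _ _ e).
- by move=> e; exfalso; exact: (mixed w1 t1 a1 z _ _ (esym e)).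
- by move/rest_case=> [-> ->].
Qed.

Definition grp (D c : nat) : seq bool := nseq c false ++ true :: nseq (D - c.+1) false.
Definition bits (D : nat) (cs : seq nat) : seq bool := flatten (map (grp D) cs).

Lemma size_grp D c : (c < D)%N -> size (grp D c) = D.
Proof. by move=> h; rewrite /grp size_cat /= !size_nseq; lia. Qed.

Lemma count_grp D c : count id (grp D c) = 1%N.
Proof. rewrite /grp count_cat /= !count_nseq /=; lia. Qed.

Lemma find_grp D c s : find id (grp D c ++ s) = c.
Proof.
rewrite /grp -catA /=; move: (nseq _ false ++ s) => t.
by elim: c => [|c IH] //=; rewrite IH.
Qed.

Lemma size_bits D cs : all (fun c => c < D)%N cs -> size (bits D cs) = (D * size cs)%N.
Proof.
elim: cs => [|c cs IH] /=; first by rewrite muln0.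
by move=> /andP[hc hs]; rewrite size_cat size_grp // IH // mulnS.
Qed.

Lemma count_bits D cs : count id (bits D cs) = size cs.
Proof. by elim: cs => [|c cs IH] //=; rewrite count_cat count_grp IH. Qed.

Lemma bits_inj D cs1 cs2 : all (fun c => c < D)%N cs1 -> all (fun c => c < D)%N cs2 ->
  size cs1 = size cs2 -> bits D cs1 = bits D cs2 -> cs1 = cs2.
Proof.
elim: cs1 cs2 => [|c1 cs1 IH] [|c2 cs2] //= /andP[h1 a1] /andP[h2 a2] [es].
move/eqP; rewrite eqseq_cat ?size_grp // => /andP[/eqP eg /eqP eb].
have ec : c1 = c2 by rewrite -(find_grp D c1 [::]) eg find_grp.
by rewrite ec (IH cs2).
Qed.

Lemma size_flatten_nseq (T : Type) j (c : seq T) :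
  size (flatten (nseq j c)) = (j * size c)%N.
Proof. by elim: j => [|j IH] //=; rewrite size_cat IH mulSn. Qed.

Lemma ret_exists (X : Type) (Sigma : Type) (st : X -> Sigma -> X) K :
  (forall x a, exists w, run st (st x a) w = x /\ (size w <= K)%N) ->
  forall u z, exists r, run st (run st z u) r = z /\ (size r <= K * size u)%N.
Proof.
move=> hK; elim=> [|a u IH] z; first by exists [::].
have [r1 [h1 s1]] := IH (st z a).
have [w [hw sw]] := hK z a.
exists (r1 ++ w); split; first by rewrite run_cat; rewrite /run /= in h1 hw *; rewrite h1 hw.
rewrite size_cat /=; lia.
Qed.

Lemma block_exists (X : Type) (Sigma : Type) (st : X -> Sigma -> X)
  (v : seq Sigma) K :
  (0 < size v)%N ->
  (forall z, exists r, run st (run st z v) r = z /\ (size r <= K * size v)%N) ->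
  exists blk : X -> seq Sigma, forall z,
    [/\ run st z (blk z) = z, take (size v) (blk z) = v &
        size (blk z) = (size v + K * size v)`!].
Proof.
move=> v0 hr.
suff [f hf] : {f : X -> seq Sigma & forall z, [/\ run st z (f z) = z, take (size v) (f z) = v &
        size (f z) = (size v + K * size v)`!]} by exists f.
apply: (@choice X (seq Sigma) (fun z b => [/\ run st z b = z, take (size v) b = v &
        size b = (size v + K * size v)`!])) => z.
have [r [hrz sr]] := hr z.
set c := v ++ r; set Bl := (size v + K * size v)`!.
have sc : size c = (size v + size r)%N by rewrite size_cat.
have dc : size c %| Bl by apply: dvdn_fact; rewrite sc; lia.
set j := Bl %/ size c.
have jc : (j * size c)%N = Bl by rewrite divnK.
have j0 : (0 < j)%N.
  rewrite lt0n; apply/eqP => j0; move: jc; rewrite j0 mul0n => e.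
  by have := fact_gt0 (size v + K * size v); rewrite -/Bl -e.
exists (flatten (nseq j c)); split.
- by apply: run_nseq; rewrite run_cat.
- rewrite -(prednK j0) /= takel_cat; last by rewrite sc leq_addr.
  by rewrite take_size_cat.
- by rewrite size_flatten_nseq.
Qed.

Lemma count_len_mono (Sigma : finType) (L L' : language Sigma) :
  (forall w, L w -> L' w) -> forall n, (count_len L n <= count_len L' n)%N.
Proof.
move=> h n; apply: subset_leq_card; apply/fintype.subsetP => t.
rewrite !inE => hw; apply/asboolP.
by apply/asboolP; exact: h.
Qed.

Lemma count_ins (X : Type) (Sigma : finType) (st : X -> Sigma -> X)
  (blk : X -> seq Sigma) (v : seq Sigma) (Bl D : nat) (x y : X) n :
  (forall z, run st z (blk z) = z) ->
  (forall z, take (size v) (blk z) = v) ->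
  (forall z, size (blk z) = Bl) ->
  (0 < size v)%N -> (0 < D)%N ->
  (count_len (fun w => run st x w = y /\ ~~ infix v w) n *
     D ^ (n %/ (D * size v)) <=
   count_len (fun w => run st x w = y) (n + Bl * (n %/ (D * size v))))%N.
Proof.
move=> hb hv hs v0 D0.
set p := size v; set k := (n %/ (D * p))%N; set m := (n + Bl * k)%N.
have hvs : forall z, (size v <= size (blk z))%N.
  move=> z; have e := congr1 size (hv z); rewrite size_take in e; move: e.
  case: ltnP; lia.
have all_cs : forall cs : k.-tuple 'I_D, all (fun c => c < D)%N (map val cs).
  by move=> cs; apply/allP => c /mapP[i _ ->]; exact: ltn_ord.
have sz : forall wc : n.-tuple Sigma * k.-tuple 'I_D,
    size (ins st blk p x wc.1 (bits D (map val wc.2))) == m.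
  move=> [w cs] /=; rewrite (@ins_size _ _ st blk p Bl hs) count_bits size_map !size_tuple.
  by [].
pose f := fun wc : n.-tuple Sigma * k.-tuple 'I_D => Tuple (sz wc).
set A := [set t : n.-tuple Sigma | `[< run st x t = y /\ ~~ infix v t >] ].
have -> : count_len (fun w => run st x w = y /\ ~~ infix v w) n = #|A| by [].
have -> : (D ^ k)%N = #|[set: k.-tuple 'I_D]| by rewrite cardsT card_tuple card_ord.
rewrite -cardsX.
have finj : {in finset.setX A [set: k.-tuple 'I_D] &, injective f}.
  move=> [w1 c1] [w2 c2]; rewrite !inE /= !andbT => /asboolP [_ a1] /asboolP [_ a2].
  move=> /(congr1 val) /= e.
  have kn : (p * size (bits D (map val c1)) <= size w1)%N.
    rewrite size_bits // size_map !size_tuple.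
    have := leq_divM n (D * p); rewrite -/k mulnC mulnA; lia.
  have kn2 : (p * size (bits D (map val c2)) <= size w2)%N.
    rewrite size_bits // size_map !size_tuple.
    have := leq_divM n (D * p); rewrite -/k mulnC mulnA; lia.
  have [ew eb] := ins_inj hv hvs (leqnn p)
     (bs1 := bits D (map val c1)) (bs2 := bits D (map val c2))
     (z := x) (w1 := w1) (w2 := w2)
     ltac:(by rewrite !size_bits // !size_map !size_tuple) kn kn2 a1 a2 e.
  have ec : map val c1 = map val c2.
    by apply: (bits_inj (D := D)) => //; rewrite !size_map !size_tuple.
  have ec' : c1 = c2 by apply: val_inj; apply: (inj_map val_inj).
  by rewrite ec' (val_inj ew).
rewrite -(card_in_imset finj).
apply: subset_leq_card; apply/fintype.subsetP => t /imsetP [[w cs] hin ->].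
move: hin; rewrite !inE /= andbT => /asboolP [hw _].
by rewrite (@ins_run _ _ st blk p hb) hw.
Qed.

Theorem mainTheorem14 (R : realType) (Sigma : finType) (X : Type)
  (E : X -> Sigma -> X -> Prop) :
  uniformly_connected E -> fully_deterministic E ->
  forall x y : X, growth_sensitive R (Lxy E x y).
Proof.
move=> [hconn [K hK]] hdet x y F Fne HF.
have [st0 hst0] := @choice (X * Sigma)%type X (fun xa z => E xa.1 xa.2 z)
  (fun xa => let: ex_intro z (conj hz _) := hdet xa.1 xa.2 in ex_intro _ z hz).
pose st := fun (x0 : X) (a : Sigma) => st0 (x0, a).
have hE : forall x0 a z, E x0 a z <-> z = st x0 a.
  move=> x0 a z; split.
    move=> h; have [z0 [_ u]] := hdet x0 a.
    by rewrite -(u _ h) (u _ (hst0 (x0, a))).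
  by move=> ->; exact: (hst0 (x0, a)).
have hwalk := walk_run hE.
have hK' : forall x0 a, exists w, run st (st x0 a) w = x0 /\ (size w <= K)%N.
  move=> x0 a; have [w [hw sw]] := hK x0 a (st x0 a) (hst0 (x0, a)).
  by exists w; split => //; apply/hwalk.
case: F Fne HF => [//|v F'] _ HF.
have [vne [w0 [Lw0 [_ fw0]]]] := HF v (mem_head _ _).
have v0 : (0 < size v)%N by rewrite lt0n size_eq0.
have [blk hblk] := block_exists v0 (fun z => ret_exists hK' v z).
set Bl := (size v + K * size v)`! in hblk.
apply: (@analytic R (count_len (avoid (Lxy E x y) (v :: F')))
          (count_len (Lxy E x y)) #|Sigma| (size v) Bl v0).
- move=> n; rewrite /count_len; apply: leq_trans (max_card _) _.
  by rewrite card_tuple.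
- move=> D n D0.
  apply: (@leq_trans (count_len (fun w => run st x w = y)
            (n + Bl * (n %/ (D * size v))))); last first.
    by apply: count_len_mono => w hw; apply/hwalk.
  apply: (leq_trans _ (count_ins (st := st) (blk := blk) (D := D) x y n
       (fun z => let: And3 a _ _ := hblk z in a)
       (fun z => let: And3 _ a _ := hblk z in a)
       (fun z => let: And3 _ _ a := hblk z in a) v0 D0)).
  rewrite leq_mul2r; apply/orP; right.
  apply: count_len_mono => w [hw ha]; split; first exact/hwalk.
  by apply: ha; exact: mem_head.
- move=> N.
  set s := w0 ++ flatten (nseq N (blk y)).
  exists (size s).
    rewrite size_cat size_flatten_nseq (let: And3 _ _ a := hblk y in a).
    have := fact_gt0 (size v + K * size v); rewrite -/Bl => hB.
    have : (N <= N * Bl)%N by rewrite leq_pmulr.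
    lia.
  apply/card_gt0P; exists (in_tuple s); rewrite inE; apply/asboolP.
  rewrite /Lxy /=; apply/hwalk; rewrite run_cat.
  have -> : run st x w0 = y by apply/hwalk.
  by apply: run_nseq; case: (hblk y).
Qed.
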